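(* The generating function $$G_{(132,321)}(x,p,q,y,z)=\sum_{n\ge 0}\ \sum_{\pi\in S_n(132,321)} x^n p^{\operatorname{asc}(\pi)} q^{\operatorname{des}(\pi)} y^{\operatorname{MNA}(\pi)} z^{\operatorname{MND}(\pi)}$$ is equal to $\dfrac{A}{(1-p^2x^2y)^3}$, where $$A=1 + x + p x^2 y - 3 p^2 x^2 y - 2 p^2 x^3 y - 2 p^3 x^4 y^2 + 3 p^4 x^4 y^2 + p^4 x^5 y^2 + p^5 x^6 y^3 - p^6 x^6 y^3 + q x^2 z + 3 p q x^3 y z + p^2 q x^4 y z + 2 p^2 q x^4 y^2 z + p^3 q x^5 y^2 z.$$
   Context: For $n\ge 0$, $S_n$ denotes the set of permutations $\pi=\pi_1\pi_2\cdots\pi_n$ of $[n]=\{1,\dots,n\}$ ($S_0$ consists of the empty permutation, for which all statistics below are $0$). A permutation $\pi\in S_n$ avoids a pattern $\tau\in S_k$ if there are no indices $i_1<\dots<i_k$ such that $\pi_{i_a}<\pi_{i_b}$ if and only if $\tau_a<\tau_b$; $S_n(\tau,\rho)$ is the set of permutations in $S_n$ avoiding both $\tau$ and $\rho$. $\operatorname{asc}(\pi)$ (resp. $\operatorname{des}(\pi)$) is the number of $i\in[n-1]$ with $\pi_i<\pi_{i+1}$ (resp. $\pi_i>\pi_{i+1}$). $\operatorname{MNA}(\pi)$ is the maximum size of a set $I\subseteq[n-1]$ such that $\pi_i<\pi_{i+1}$ for all $i\in I$ and $|i-j|\ge 2$ for distinct $i,j\in I$; $\operatorname{MND}(\pi)$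 is defined analogously with $\pi_i>\pi_{i+1}$. *)

(* Defs.v *)
From HB Require Import structures.
From mathcomp Require Import all_boot all_order all_algebra all_fingroup.
Set Implicit Arguments. Unset Strict Implicit. Unset Printing Implicit Defensive.
Import Order.TTheory GRing.Theory Num.Theory.

(* The one-line notation of a permutation pi of 'I_n (values 0..n-1;
   only relative order matters for all notions below). *)
Definition word (n : nat) (pi : 'S_n) : seq nat := [seq val (pi i) | i <- enum 'I_n].

Definition contains (w tau : seq nat) : bool :=
  [exists f : {ffun 'I_(size tau) -> 'I_(size w)},
     [forall a : 'I_(size tau), forall b : 'I_(size tau),
        ((a < b) ==> (f a < f b)) &&
        ((nth 0 w (f a) < nth 0 w (f b)) == (nth 0 tau a < nth 0 tau b))]].

Definition avoids (w tau : seq nat) : bool := ~~ contains w tau.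

(* 0-based positions i with i+1 < size w (i.e. i+1 in [n-1] 1-based). *)
Definition is_asc (w : seq nat) (i : nat) : bool :=
  (i.+1 < size w) && (nth 0 w i < nth 0 w i.+1).
Definition is_des (w : seq nat) (i : nat) : bool :=
  (i.+1 < size w) && (nth 0 w i > nth 0 w i.+1).

Definition asc (w : seq nat) : nat := count (is_asc w) (iota 0 (size w)).
Definition des (w : seq nat) : nat := count (is_des w) (iota 0 (size w)).

Definition nonadj_set (m : nat) (P : nat -> bool) (I : {set 'I_m}) : bool :=
  [forall i in I, P i] &&
  [forall i in I, forall j in I, (i != j) ==> ((i.+2 <= j) || (j.+2 <= i))].

Definition MNA (w : seq nat) : nat :=
  \max_(I : {set 'I_(size w)} | nonadj_set (is_asc w) I) #|I|.
Definition MND (w : seq nat) : nat :=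
  \max_(I : {set 'I_(size w)} | nonadj_set (is_des w) I) #|I|.

Local Open Scope ring_scope.

(* Coefficient of x^n in G_{(132,321)}(x,p,q,y,z). *)
Definition Gcoef (R : comNzRingType) (p q y z : R) (n : nat) : R :=
  \sum_(pi : 'S_n | avoids (word pi) [:: 1; 3; 2]%N && avoids (word pi) [:: 3; 2; 1]%N)
     p ^+ asc (word pi) * q ^+ des (word pi)
     * y ^+ MNA (word pi) * z ^+ MND (word pi).

Definition Apoly (R : comNzRingType) (p q y z : R) : {poly R} :=
  1 + 'X + (p * y)%:P * 'X^2 - (3%:R * p ^+ 2 * y)%:P * 'X^2
  - (2%:R * p ^+ 2 * y)%:P * 'X^3 - (2%:R * p ^+ 3 * y ^+ 2)%:P * 'X^4
  + (3%:R * p ^+ 4 * y ^+ 2)%:P * 'X^4 + (p ^+ 4 * y ^+ 2)%:P * 'X^5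
  + (p ^+ 5 * y ^+ 3)%:P * 'X^6 - (p ^+ 6 * y ^+ 3)%:P * 'X^6
  + (q * z)%:P * 'X^2 + (3%:R * p * q * y * z)%:P * 'X^3
  + (p ^+ 2 * q * y * z)%:P * 'X^4 + (2%:R * p ^+ 2 * q * y ^+ 2 * z)%:P * 'X^4
  + (p ^+ 3 * q * y ^+ 2 * z)%:P * 'X^5.

Definition Dpoly (R : comNzRingType) (p y : R) : {poly R} :=
  (1 - (p ^+ 2 * y)%:P * 'X^2) ^+ 3.

(* Main.v *)
Require Import Defs.
From HB Require Import structures.
From mathcomp Require Import all_boot all_order all_algebra all_fingroup.
From mathcomp Require Import zify.
Set Implicit Arguments. Unset Strict Implicit. Unset Printing Implicit Defensive.

Definition Rn (n a b : nat) : seq nat := iota 0 a ++ iota (a + b) (n - (a + b)).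
Definition blk (n a b : nat) : seq nat := iota a b ++ Rn n a b.

Lemma size_Rn n a b : a + b <= n -> size (Rn n a b) = n - b.
Proof. move=> h; rewrite /Rn size_cat !size_iota; lia. Qed.

Lemma size_blk n a b : a + b <= n -> size (blk n a b) = n.
Proof. move=> h; rewrite /blk size_cat size_Rn // size_iota; lia. Qed.

Lemma nth_Rn n a b i : a + b <= n -> i < n - b ->
  nth 0 (Rn n a b) i = if i < a then i else b + i.
Proof.
move=> h hi; rewrite /Rn nth_cat size_iota; case: ifP => hia.
  by rewrite nth_iota.
rewrite nth_iota; lia.
Qed.

Lemma nth_blk n a b i : a + b <= n -> i < n ->
  nth 0 (blk n a b) i = if i < b then a + i else if i < a + b then i - b else i.
Proof.
move=> h hi; rewrite /blk nth_cat size_iota; case: ifP => hib.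
  by rewrite nth_iota.
rewrite nth_Rn //; try lia.
case: ifP; case: ifP; lia.
Qed.

Lemma sorted_Rn n a b : a + b <= n -> sorted ltn (Rn n a b).
Proof.
move=> h; apply/(sortedP 0) => i; rewrite size_Rn // => hi.
rewrite !nth_Rn //; try lia.
case: ifP; case: ifP; lia.
Qed.

Lemma mem_Rn n a b x : x \in Rn n a b = (x < a) || ((a + b <= x) && (x < n)).
Proof. rewrite /Rn mem_cat !mem_iota; lia. Qed.

Lemma mem_blk n a b x : a + b <= n -> x \in blk n a b = (x < n).
Proof. move=> h; rewrite /blk mem_cat mem_Rn mem_iota; lia. Qed.

Lemma uniq_blk n a b : a + b <= n -> uniq (blk n a b).
Proof.
move=> h; rewrite /blk /Rn cat_uniq !iota_uniq cat_uniq !iota_uniq /= andbT.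
apply/andP; split.
  apply/hasPn => x; rewrite mem_cat !mem_iota /=; lia.
apply/hasPn => x; rewrite !mem_iota /=; lia.
Qed.

Definition valid (n a b : nat) := ((a == 0) && (b == 0)) || [&& 0 < a, 0 < b & a + b <= n].

Lemma is_asc_blk n a b i : valid n a b ->
  is_asc (blk n a b) i = (i.+1 < n) && (i.+1 != b).
Proof.
move=> hv; have h : a + b <= n by move: hv; rewrite /valid; lia.
rewrite /is_asc size_blk //; case: (ltnP i.+1 n) => hi //=.
rewrite !nth_blk //; try lia.
move: hv; rewrite /valid.
repeat (case: ifP => ?); move=> *; apply/idP/idP; lia.
Qed.

Lemma is_des_blk n a b i : valid n a b ->
  is_des (blk n a b) i = (i.+1 < n) && (i.+1 == b).
Proof.
move=> hv; have h : a + b <= n by move: hv; rewrite /valid; lia.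
rewrite /is_des size_blk //; case: (ltnP i.+1 n) => hi //=.
rewrite !nth_blk //; try lia.
move: hv; rewrite /valid.
repeat (case: ifP => ?); move=> *; apply/idP/idP; lia.
Qed.
Lemma contains_pat (w : seq nat) (t0 t1 t2 : nat) :
  contains w [:: t0; t1; t2] ->
  exists i j k, [/\ i < j, j < k, k < size w &
     [/\ (nth 0 w i < nth 0 w j) = (t0 < t1),
         (nth 0 w i < nth 0 w k) = (t0 < t2) &
         (nth 0 w j < nth 0 w k) = (t1 < t2)]].
Proof.
case/existsP => f /forallP H.
have H01 := forallP (H (@Ordinal 3 0 isT)) (@Ordinal 3 1 isT).
have H02 := forallP (H (@Ordinal 3 0 isT)) (@Ordinal 3 2 isT).
have H12 := forallP (H (@Ordinal 3 1 isT)) (@Ordinal 3 2 isT).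
move: H01 H02 H12 => /andP[/implyP l01 /eqP e01] /andP[/implyP l02 /eqP e02] /andP[/implyP l12 /eqP e12].
exists (f (@Ordinal 3 0 isT)), (f (@Ordinal 3 1 isT)), (f (@Ordinal 3 2 isT)).
split; [exact: l01|exact: l12|exact: ltn_ord|split; by []].
Qed.
Lemma pat_contains (w : seq nat) (t0 t1 t2 : nat) i j k :
  i < j -> j < k -> k < size w ->
  (nth 0 w i < nth 0 w j) = (t0 < t1) ->
  (nth 0 w i < nth 0 w k) = (t0 < t2) ->
  (nth 0 w j < nth 0 w k) = (t1 < t2) ->
  (nth 0 w j < nth 0 w i) = (t1 < t0) ->
  (nth 0 w k < nth 0 w i) = (t2 < t0) ->
  (nth 0 w k < nth 0 w j) = (t2 < t1) ->
  contains w [:: t0; t1; t2].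
Proof.
move=> ij jk ks e01 e02 e12 e10 e20 e21.
have iS : i < size w by apply: ltn_trans ks; apply: ltn_trans jk.
have jS : j < size w by apply: ltn_trans ks.
apply/existsP; exists [ffun a : 'I_3 => nth (Ordinal ks) [:: Ordinal iS; Ordinal jS; Ordinal ks] a].
apply/forallP => a; apply/forallP => b; rewrite !ffunE.
case: a => [[|[|[|a]]] Ha] //; case: b => [[|[|[|b]]] Hb] //=;
  rewrite ?ltnn ?e01 ?e02 ?e12 ?e10 ?e20 ?e21 ?ij ?jk ?(ltn_trans ij jk) ?eqxx ?implybT ?andbT //.
Qed.

Lemma avoid_blk n a b : valid n a b ->
  avoids (blk n a b) [:: 1; 3; 2] && avoids (blk n a b) [:: 3; 2; 1].
Proof.
move=> hv; have h : a + b <= n by move: hv; rewrite /valid; lia.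
apply/andP; split; apply/negP => /contains_pat [i [j [k [ij jk ks [e1 e2 e3]]]]];
  rewrite size_blk // in ks; rewrite !nth_blk /= in e1 e2 e3; try lia;
  move: hv e1 e2 e3; rewrite /valid; repeat (case: ifP => ?); move=> *; try lia.
Qed.
Lemma size_word n (pi : 'S_n) : size (word pi) = n.
Proof. by rewrite /word size_map size_enum_ord. Qed.

Lemma nth_word n (pi : 'S_n) (i : 'I_n) : nth 0 (word pi) i = pi i.
Proof.
by rewrite /word (nth_map i) ?size_enum_ord // nth_ord_enum.
Qed.

Lemma word_inj n : injective (@word n).
Proof.
move=> p1 p2 e; apply/permP => i; apply: val_inj.
by move: (nth_word p1 i) (nth_word p2 i); rewrite e => ->.
Qed.

Lemma uniq_word n (pi : 'S_n) : uniq (word pi).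
Proof.
rewrite /word map_inj_uniq ?enum_uniq //.
by move=> i j /val_inj /perm_inj.
Qed.

Lemma mem_word n (pi : 'S_n) x : (x \in word pi) = (x < n).
Proof.
rewrite /word; apply/idP/idP.
  by case/mapP => i _ ->; apply: ltn_ord.
move=> hx; apply/mapP; exists ((pi^-1)%g (Ordinal hx)); first by rewrite mem_enum.
by rewrite permKV.
Qed.

Lemma exists_perm n (w : seq nat) : uniq w -> size w = n ->
  (forall x, x \in w -> x < n) -> exists pi : 'S_n, word pi = w.
Proof.
move=> uw sw bw.
have hb : forall i : 'I_n, nth 0 w i < n.
  by move=> i; apply: bw; apply: mem_nth; rewrite sw.
pose f (i : 'I_n) : 'I_n := Ordinal (hb i).
have finj : injective f.
  move=> i j /(congr1 val) /= e; apply: val_inj => /=.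
  by move/eqP: e; rewrite nth_uniq ?sw // => /eqP.
exists (perm finj).
apply: (@eq_from_nth _ 0); first by rewrite size_word sw.
move=> i; rewrite size_word => hi.
by rewrite (nth_word _ (Ordinal hi)) permE.
Qed.

Lemma no321 w i j k : avoids w [:: 3; 2; 1] -> i < j -> j < k -> k < size w ->
  nth 0 w j < nth 0 w i -> nth 0 w k < nth 0 w j -> False.
Proof.
move=> /negP H ij jk ks h1 h2; apply: H.
by apply: (pat_contains (i:=i) (j:=j) (k:=k)) => //=; apply/idP/idP => //; lia.
Qed.

Lemma no132 w i j k : avoids w [:: 1; 3; 2] -> i < j -> j < k -> k < size w ->
  nth 0 w i < nth 0 w k -> nth 0 w k < nth 0 w j -> False.
Proof.
move=> /negP H ij jk ks h1 h2; apply: H.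
by apply: (pat_contains (i:=i) (j:=j) (k:=k)) => //=; apply/idP/idP => //; lia.
Qed.
Lemma char_avoid (w : seq nat) : uniq w -> (forall x, (x \in w) = (x < size w)) ->
  avoids w [:: 1; 3; 2] -> avoids w [:: 3; 2; 1] ->
  exists a b, valid (size w) a b /\ w = blk (size w) a b.
Proof.
move=> uw mw a132 a321.
set n := size w.
have dist : forall i j, i < n -> j < n -> (nth 0 w i == nth 0 w j) = (i == j).
  by move=> i j hi hj; rewrite nth_uniq.
case: (posnP n) => [n0|npos].
  exists 0, 0; split => //.
  by move: n0; rewrite /n; case: w {uw mw a132 a321 dist n} => //= _ _; rewrite /blk.
have w0 : 0 \in w by rewrite mw.
set b := index 0 w.
have hb : b < n by rewrite index_mem.
have wb : nth 0 w b = 0 by rewrite nth_index.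
have nz : forall i, i < n -> i != b -> 0 < nth 0 w i.
  move=> i hi hib; rewrite lt0n; apply/negP => /eqP e.
  by move: (dist i b hi hb); rewrite e wb eqxx (negbTE hib).
have sL : sorted ltn (take b w).
  apply/(sortedP 0) => i; rewrite size_take hb => hi; rewrite !nth_take //; last lia.
  case: (ltngtP (nth 0 w i) (nth 0 w i.+1)) => // h.
    exfalso; apply: (no321 a321 (i:=i) (j:=i.+1) (k:=b)) => //; rewrite wb; apply: nz; lia.
  by move/eqP: h; rewrite dist; lia.
have sR : sorted ltn (drop b w).
  apply/(sortedP 0) => i; rewrite size_drop => hi; rewrite !nth_drop.
  case: (ltngtP (nth 0 w (b + i)) (nth 0 w (b + i.+1))) => // h.
    exfalso; case: (posnP i) => [i0|ipos].
      by move: h; rewrite i0 addn0 wb.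
    apply: (no132 a132 (i:=b) (j:=b + i) (k:=b + i.+1)); try lia.
    by rewrite wb; apply: nz; lia.
  by move/eqP: h; rewrite dist; lia.
case: (posnP b) => [b0|bpos].
  exists 0, 0; split => //.
  have -> : w = drop b w by rewrite b0 drop0.
  rewrite /blk /Rn /= subn0.
  apply: (irr_sorted_eq ltn_trans ltnn) => //; first exact: iota_ltn_sorted.
  by move=> x; rewrite b0 drop0 mw mem_iota.
set a := nth 0 w 0; set m := nth 0 w b.-1.
have apos : 0 < a by apply: nz; lia.
have incL : forall i j, i < j -> j < b -> nth 0 w i < nth 0 w j.
  move=> i j ij jb.
  have := sorted_ltn_nth ltn_trans 0 sL; rewrite size_take hb => /(_ i j).
  by rewrite !nth_take //; try lia; apply => //; rewrite inE; lia.
have incR : forall i j, b <= i -> i < j -> j < n -> nth 0 w i < nth 0 w j.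
  move=> i j bi ij jn.
  have := sorted_ltn_nth ltn_trans 0 sR; rewrite size_drop => /(_ (i - b) (j - b)).
  rewrite !nth_drop !subnKC //; try lia; apply; rewrite ?inE; lia.
have hm : m < n by rewrite -mw; apply: mem_nth; rewrite -/n; lia.
have am : a <= m.
  case: (posnP b.-1) => h; first by rewrite /a /m h.
  by apply: ltnW; apply: incL; lia.
have memL : forall x, (x \in take b w) = (a <= x <= m).
  move=> x; apply/idP/idP.
    case/(nthP 0) => i; rewrite size_take hb => hi <-; rewrite nth_take //.
    apply/andP; split.
      by case: (posnP i) => h; [rewrite h | apply: ltnW; apply: incL].
    by case: (ltnP i b.-1) => h; [apply: ltnW; apply: incL; lia | have -> : i = b.-1 by lia].
  move=> /andP [ax xm].
  have xw : x \in w by rewrite mw; lia.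
  set k := index x w.
  have hk : k < n by rewrite index_mem.
  have wk : nth 0 w k = x by rewrite nth_index.
  case: (ltnP k b) => kb.
    by rewrite -wk -(nth_take 0 kb); apply: mem_nth; rewrite size_take hb.
  exfalso.
  have kb' : b < k.
    rewrite ltn_neqAle kb andbT; apply/negP => /eqP e.
    by move: ax; rewrite -wk -e wb; lia.
  have xa : a < x.
    rewrite ltn_neqAle ax andbT; apply/negP => /eqP e.
    by move: (dist 0 k npos hk); rewrite -/a e wk eqxx; lia.
  have xm' : x < m.
    rewrite ltn_neqAle xm andbT; apply/negP => /eqP e.
    by move: (dist k b.-1 hk (leq_ltn_trans (leq_pred b) hb)); rewrite -/m wk e eqxx; lia.
  have b1 : 0 < b.-1.
    case: (posnP b.-1) => // h; by move: xa xm'; rewrite /m h -/a; lia.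
  by apply: (no132 a132 (i:=0) (j:=b.-1) (k:=k)) => //; try lia; rewrite ?wk.
have sizeL : b = m - a + 1.
  have : perm_eq (take b w) (iota a (m - a + 1)).
    apply: uniq_perm; [exact: take_uniq | exact: iota_uniq |].
    by move=> x; rewrite memL mem_iota; lia.
  by move/perm_size; rewrite size_take hb size_iota.
have abn : a + b <= n by lia.
have eL : take b w = iota a b.
  apply: (irr_sorted_eq ltn_trans ltnn) => //; first exact: iota_ltn_sorted.
  by move=> x; rewrite memL mem_iota; lia.
have eR : drop b w = Rn n a b.
  apply: (irr_sorted_eq ltn_trans ltnn) => //; first exact: sorted_Rn.
  move=> x; rewrite mem_Rn.
  have := uw; rewrite -{1}(cat_take_drop b w) cat_uniq => /and3P [_ /hasPn hd _].
  apply/idP/idP.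
    move=> xd; have := hd x xd; rewrite memL => h.
    have : x \in w by apply: mem_drop xd.
    rewrite mw -/n; lia.
  move=> hx; have : x \in w by rewrite mw; lia.
  rewrite -{1}(cat_take_drop b w) mem_cat memL; lia.
exists a, b; split; first by rewrite /valid; lia.
by rewrite -{1}(cat_take_drop b w) eL eR.
Qed.
Lemma max_nonadj m (P : nat -> bool) K :
  (forall I : {set 'I_m}, nonadj_set P I -> #|I| <= K) ->
  (exists I : {set 'I_m}, nonadj_set P I /\ #|I| = K) ->
  \max_(I : {set 'I_m} | nonadj_set P I) #|I| = K.
Proof.
move=> H1 [I0 [H0 HK]]; apply/eqP; rewrite eqn_leq; apply/andP; split.
  by apply/bigmax_leqP => I HI; apply: H1.
by rewrite -HK; exact: leq_bigmax_cond.
Qed.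

Lemma card_bound m (I : {set 'I_m}) (g : nat -> nat) K :
  (forall i j : 'I_m, i \in I -> j \in I -> g i = g j -> i = j) ->
  (forall i : 'I_m, i \in I -> g i < K) -> #|I| <= K.
Proof.
move=> ginj gb; rewrite cardE -(size_iota 0 K) -(size_map (fun i : 'I_m => g i)).
apply: uniq_leq_size.
  rewrite map_inj_in_uniq ?enum_uniq // => i j; rewrite !mem_enum; exact: ginj.
move=> x /mapP [i]; rewrite mem_enum => /gb ib ->; rewrite mem_iota; lia.
Qed.

Lemma nonadjP m (P : nat -> bool) (I : {set 'I_m}) :
  nonadj_set P I ->
  (forall i, i \in I -> P i) /\
  (forall i j, i \in I -> j \in I -> i != j -> (i.+2 <= j) || (j.+2 <= i)).
Proof.
case/andP => /forallP H1 /forallP H2; split.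
  by move=> i iI; have := H1 i; rewrite iI.
move=> i j iI jI ij; have := H2 i; rewrite iI /= => /forallP /(_ j).
by rewrite jI ij.
Qed.

Lemma max_asc m b (P : nat -> bool) : b <= m ->
  (forall i, P i = (i.+1 < m) && (i.+1 != b)) ->
  \max_(I : {set 'I_m} | nonadj_set P I) #|I| = b./2 + (m - b)./2.
Proof.
move=> bm HP; apply: max_nonadj.
  move=> I /nonadjP [H1 H2].
  apply: (card_bound (g := fun i => if i < b then i./2 else b./2 + (i - b)./2)).
    move=> i j iI jI e; apply/eqP; apply/negP => /negP ij.
    have := H2 i j iI jI ij; have := H1 i iI; have := H1 j jI; rewrite !HP.
    move: e; case: ifP; case: ifP => *; lia.
  move=> i iI; have := H1 i iI; rewrite HP; case: ifP => *; lia.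
case: m bm HP => [|m] bm HP.
  by exists set0; rewrite cards0; split; [rewrite /nonadj_set; apply/andP; split; apply/forallP => i; rewrite in_set0 | lia].
set K := b./2 + (m.+1 - b)./2.
pose h (j : nat) := if j < b./2 then j.*2 else b + (j - b./2).*2.
have hb : forall j : 'I_K, h j < m.+1.
  move=> j; have := ltn_ord j; rewrite /h /K; case: ifP => *; lia.
pose f (j : 'I_K) : 'I_m.+1 := inord (h j).
have finj : injective f.
  move=> j1 j2 e0; have := congr1 (@nat_of_ord _) e0; rewrite /f !inordK ?hb // => e; apply: val_inj => /=.
  move: e; rewrite /h; have := ltn_ord j1; have := ltn_ord j2; case: ifP; case: ifP => *; lia.
exists (f @: 'I_K); split; last by rewrite card_imset // card_ord.
apply/andP; split.
  apply/forallP => i; apply/implyP => /imsetP [j _ ->].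
  rewrite HP /f inordK ?hb //; have := ltn_ord j; rewrite /h /K; case: ifP => *; lia.
apply/forallP => i; apply/implyP => /imsetP [j1 _ ->].
apply/forallP => i'; apply/implyP => /imsetP [j2 _ ->].
apply/implyP => ne; rewrite /f !inordK ?hb //.
have ne' : nat_of_ord j1 != nat_of_ord j2 by apply: contraNneq ne => /val_inj ->.
move: ne'; rewrite /h; have := ltn_ord j1; have := ltn_ord j2; case: ifP; case: ifP => *; lia.
Qed.

Lemma max_des m b (P : nat -> bool) : (b == 0) || (b < m) ->
  (forall i, P i = (i.+1 < m) && (i.+1 == b)) ->
  \max_(I : {set 'I_m} | nonadj_set P I) #|I| = (0 < b).
Proof.
move=> bm HP; apply: max_nonadj.
  move=> I /nonadjP [H1 H2].
  apply: (card_bound (g := fun i => 0)).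
    move=> i j iI jI _; apply: ord_inj; have := H1 i iI; have := H1 j jI; rewrite !HP; lia.
  move=> i iI; have := H1 i iI; rewrite HP; lia.
case: (posnP b) => [b0|bpos].
  exists set0; rewrite cards0; split => //.
  by rewrite /nonadj_set; apply/andP; split; apply/forallP => i; rewrite in_set0.
have hb : b.-1 < m by lia.
exists [set Ordinal hb]; rewrite cards1; split => //.
apply/andP; split.
  by apply/forallP => i; apply/implyP; rewrite in_set1 => /eqP ->; rewrite HP /=; lia.
apply/forallP => i; apply/implyP; rewrite in_set1 => /eqP ->.
apply/forallP => j; apply/implyP; rewrite in_set1 => /eqP ->.
by rewrite eqxx.
Qed.

Lemma count_split (A B : pred nat) s :
  count (fun i => A i && B i) s + count (fun i => A i && ~~ B i) s = count A s.
Proof. elim: s => //= x s <-; case: (A x); case: (B x) => /=; lia. Qed.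

Lemma count_des m b (P : nat -> bool) : (b == 0) || (b < m) ->
  (forall i, P i = (i.+1 < m) && (i.+1 == b)) -> count P (iota 0 m) = (0 < b).
Proof.
move=> bm HP; case: (posnP b) => [b0|bpos].
  rewrite (eq_in_count (a2 := pred0)) ?count_pred0 // => i _; rewrite HP b0 /=; lia.
rewrite (eq_in_count (a2 := pred1 b.-1)).
  by rewrite count_uniq_mem ?iota_uniq // mem_iota; lia.
move=> i; rewrite mem_iota HP /=; lia.
Qed.

Lemma count_asc m b (P : nat -> bool) : (b == 0) || (b < m) ->
  (forall i, P i = (i.+1 < m) && (i.+1 != b)) -> count P (iota 0 m) = m.-1 - (0 < b).
Proof.
move=> bm HP.
have := count_split (fun i => i.+1 < m) (fun i => i.+1 == b) (iota 0 m).
rewrite (count_des (b := b) (P := fun i => (i.+1 < m) && (i.+1 == b))) // (eq_count HP).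
have -> : count (fun i => i.+1 < m) (iota 0 m) = m.-1.
  case: m {bm HP} => // m; have -> : iota 0 m.+1 = iota 0 m ++ [:: m] by rewrite -addn1 iotaD.
  rewrite count_cat /=.
  rewrite (eq_in_count (a2 := predT)); last by move=> i; rewrite mem_iota /=; lia.
  rewrite count_predT size_iota ltnn /=; lia.
lia.
Qed.
From mathcomp Require Import ring.
Import Order.TTheory GRing.Theory Num.Theory.
Local Open Scope ring_scope.
Definition pairs (n : nat) : seq (nat * nat) :=
  (0, 0) :: [seq (a, b) | b <- iota 1 n, a <- iota 1 (n - b)].

Lemma mem_pairs n a b : ((a, b) \in pairs n) = valid n a b.
Proof.
rewrite /pairs in_cons /valid xpair_eqE; congr (_ || _).
apply/allpairsPdep/idP.
  by case=> b' [a' [hb ha [-> ->]]]; move: hb ha; rewrite !mem_iota; lia.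
move=> h; exists b, a; rewrite !mem_iota; split => //; lia.
Qed.

Lemma uniq_pairs n : uniq (pairs n).
Proof.
rewrite /pairs /= ; apply/andP; split.
  by apply/negP => /allpairsPdep [b [a [hb _ [_ e]]]]; move: hb; rewrite -e mem_iota.
apply: allpairs_uniq_dep; first exact: iota_uniq.
  by move=> x _; exact: iota_uniq.
by move=> [x1 y1] [x2 y2] _ _ /= [-> ->].
Qed.

Definition recab (w : seq nat) : nat * nat :=
  if w is x :: _ then (if x == 0 then (0, 0) else (x, index 0 w)) else (0, 0).

Lemma recab_blk n a b : valid n a b -> recab (blk n a b) = (a, b).
Proof.
rewrite /valid => /orP [/andP [/eqP -> /eqP ->] | /and3P [ha hb hab]].
  by rewrite /blk /Rn /=; case: n.
case: b hb hab => // b _ hab; rewrite /blk /=.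
case: a ha hab => // a _ hab /=.
by rewrite index_cat mem_iota /= size_iota addn0.
Qed.

Lemma Gcoef_pairs (R : comNzRingType) (p q y z : R) n :
  Gcoef p q y z n = \sum_(ab <- pairs n)
     (p ^+ asc (blk n ab.1 ab.2) * q ^+ des (blk n ab.1 ab.2)
     * y ^+ MNA (blk n ab.1 ab.2) * z ^+ MND (blk n ab.1 ab.2)).
Proof.
set F := fun w => p ^+ asc w * q ^+ des w * y ^+ MNA w * z ^+ MND w.
rewrite /Gcoef.
rewrite -big_filter -(big_map (@word n) predT F).
rewrite -(big_map (fun ab => blk n ab.1 ab.2) predT F).
apply: perm_big; apply: uniq_perm.
- rewrite map_inj_uniq ?filter_uniq ?index_enum_uniq //; exact: word_inj.
- rewrite map_inj_in_uniq ?uniq_pairs // => [[a1 b1] [a2 b2]].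
  rewrite !mem_pairs /= => h1 h2 e.
  by rewrite -(recab_blk h1) -(recab_blk h2) e.
move=> w; apply/mapP/mapP.
  case=> pi; rewrite mem_filter => /andP [/andP [h1 h2] _] ->.
  have hm : forall x, (x \in word pi) = (x < size (word pi))%N.
    by move=> x; rewrite mem_word size_word.
  have := char_avoid (uniq_word pi) hm h1 h2.
  rewrite size_word => [[a [b [hv e]]]].
  by exists (a, b); rewrite ?mem_pairs.
case=> [[a b]]; rewrite mem_pairs /= => hv ->.
have hab : (a + b <= n)%N by move: hv; rewrite /valid; lia.
have hm : forall x, x \in blk n a b -> (x < n)%N by move=> x; rewrite mem_blk.
have [pi epi] := exists_perm (uniq_blk hab) (size_blk hab) hm.
exists pi => //; rewrite mem_filter mem_index_enum andbT epi.
exact: avoid_blk.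
Qed.

Lemma stats_blk n a b : valid n a b ->
  [/\ asc (blk n a b) = (n.-1 - (0 < b))%N, des (blk n a b) = (0 < b)%N :> nat,
      MNA (blk n a b) = (b./2 + (n - b)./2)%N & MND (blk n a b) = (0 < b)%N :> nat].
Proof.
move=> hv; have hab : (a + b <= n)%N by move: hv; rewrite /valid; lia.
have hb : (b == 0) || (b < n)%N by move: hv; rewrite /valid; lia.
have hs := size_blk hab.
split.
- rewrite /asc (count_asc (b := b)) ?hs // => i; rewrite is_asc_blk ?hs //.
- rewrite /des (count_des (b := b)) ?hs // => i; rewrite is_des_blk ?hs //.
- rewrite /MNA (max_asc (b := b)) ?hs //; first lia.
  by move=> i; rewrite is_asc_blk ?hs.
- rewrite /MND (max_des (b := b)) ?hs //.
  by move=> i; rewrite is_des_blk ?hs.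
Qed.

Lemma sum_const_seq (R : comNzRingType) (c : R) (s : seq nat) :
  \sum_(i <- s) c = c *+ size s.
Proof. by elim: s => [|x s IH]; rewrite ?big_nil ?big_cons ?IH ?mulrS. Qed.

Definition Sr (R : comNzRingType) (y : R) (n : nat) : R :=
  \sum_(1 <= b < n.+1) y ^+ (b./2 + (n - b)./2) *+ (n - b).

Lemma Gcoef_S (R : comNzRingType) (p q y z : R) n :
  Gcoef p q y z n = p ^+ n.-1 * y ^+ n./2 + p ^+ n.-2 * q * z * Sr y n.
Proof.
rewrite Gcoef_pairs /pairs big_cons big_allpairs_dep /=.
have [-> -> -> ->] := stats_blk (n := n) (a := 0) (b := 0) isT.
rewrite /= add0n expr0 !mulr1; congr (_ + _); first by congr (_ ^+ _ * _ ^+ _); lia.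
rewrite /Sr mulr_sumr /index_iota subn1 /=.
apply: eq_big_seq => b; rewrite mem_iota => hb.
rewrite (eq_big_seq (fun _ => p ^+ n.-2 * q * y ^+ (b./2 + (n - b)./2) * z)).
  by rewrite sum_const_seq size_iota !mulrnAr mulrAC.
move=> a; rewrite mem_iota => ha.
have [-> -> -> ->] := stats_blk (n := n) (a := a) (b := b) (ltac:(rewrite /valid; lia)).
have -> : (0 < b)%N = true by lia.
by rewrite expr1 /=; congr (_ * _ * _ * _); congr (_ ^+ _); lia.
Qed.
Definition Qr (R : comNzRingType) (y : R) (n : nat) : R :=
  \sum_(1 <= b < n.+1) y ^+ (b./2 + (n - b)./2).

Section Rec.
Variable R : comNzRingType.
Variable y : R.

Lemma Qrec n : Qr y n.+2 = y * Qr y n + y ^+ (n.+1)./2 + y ^+ (n.+2)./2.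
Proof.
rewrite /Qr (big_nat_recr n.+2 1) // (big_nat_recr n.+1 1) // /= mulr_sumr.
congr (_ + _ + _); [| by congr (_ ^+ _); lia | by congr (_ ^+ _); lia].
apply: eq_big_nat => b hb; rewrite -exprS; congr (_ ^+ _); lia.
Qed.

Lemma Srec n : Sr y n.+2 = y * Sr y n + 2%:R * y * Qr y n + y ^+ (n.+1)./2.
Proof.
rewrite /Sr /Qr (big_nat_recr n.+2 1) // (big_nat_recr n.+1 1) // /= subnn mulr0n addr0.
rewrite !mulr_sumr -big_split /=; congr (_ + _); last first.
  have -> : (n.+2 - n.+1 = 1)%N by lia.
  by rewrite mulr1n; congr (_ ^+ _); lia.
apply: eq_big_nat => b hb.
have -> : (b./2 + (n.+2 - b)./2 = (b./2 + (n - b)./2).+1)%N by lia.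
have -> : (n.+2 - b = (n - b) + 2)%N by lia.
rewrite exprS -[_ *+ (n - b + 2)]mulr_natr -[_ *+ (n - b)]mulr_natr natrD; ring.
Qed.

Lemma SQ_even t :
  Sr y (t.*2.+2) = (t%:R + 1) ^+ 2 * y ^+ t + t%:R * (t%:R + 1) * y ^+ t.+1 /\
  Qr y (t.*2.+2) = (t%:R + 1) * (y ^+ t.+1 + y ^+ t).
Proof.
elim: t => [|t [IHs IHq]].
  rewrite /Sr /Qr /index_iota /= !big_cons !big_nil /=.
  change (0.*2.+2 - 1)%N with 1%N; change (0.*2.+2 - 2)%N with 0%N; split; ring.
rewrite -[(t.+1).*2.+2]/((t.*2.+2).+2) (Srec (t.*2.+2)) (Qrec (t.*2.+2)) IHs IHq.
have -> : ((t.*2.+2).+1)./2 = t.+1 by lia.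
have -> : ((t.*2.+2).+2)./2 = t.+2 by lia.
rewrite -!natr1 !exprS; split; ring.
Qed.

Lemma SQ_odd t :
  Sr y (t.*2.+1) = t%:R * (2%:R * t%:R + 1) * y ^+ t /\
  Qr y (t.*2.+1) = (2%:R * t%:R + 1) * y ^+ t.
Proof.
elim: t => [|t [IHs IHq]].
  rewrite /Sr /Qr /index_iota /= !big_cons !big_nil /=.
  change (0.*2.+1 - 1)%N with 0%N; split; ring.
rewrite -[(t.+1).*2.+1]/((t.*2.+1).+2) (Srec (t.*2.+1)) (Qrec (t.*2.+1)) IHs IHq.
have -> : ((t.*2.+1).+1)./2 = t.+1 by lia.
have -> : ((t.*2.+1).+2)./2 = t.+1 by lia.
rewrite -!natr1 !exprS; split; ring.
Qed.
End Rec.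

Section Fin.
Variable R : comNzRingType.
Variables p q y z : R.

Lemma Gcl_even t : Gcoef p q y z (t.*2.+2) =
  p * (p ^+ 2) ^+ t * (y * y ^+ t) + (p ^+ 2) ^+ t * q * z *
   ((t%:R + 1) ^+ 2 * y ^+ t + t%:R * (t%:R + 1) * (y * y ^+ t)).
Proof.
rewrite Gcoef_S (SQ_even y t).1.
have -> : ((t.*2.+2).-2 = 2 * t)%N by lia.
have -> : ((t.*2.+2).-1 = (2 * t).+1)%N by lia.
have -> : ((t.*2.+2)./2 = t.+1)%N by rewrite /= doubleK.
by rewrite (exprS p) !(exprS y) exprM.
Qed.

Lemma Gcl_odd t : Gcoef p q y z (t.*2.+3) =
  p ^+ 2 * (p ^+ 2) ^+ t * (y * y ^+ t) + p * (p ^+ 2) ^+ t * q * z *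
   ((t%:R + 1) * (2%:R * (t%:R + 1) + 1) * (y * y ^+ t)).
Proof.
rewrite Gcoef_S -[(t.*2.+3)%N]/((t.+1).*2.+1)%N (SQ_odd y t.+1).1.
have -> : (((t.+1).*2.+1).-2 = (2 * t).+1)%N by lia.
have -> : (((t.+1).*2.+1).-1 = 2 + 2 * t)%N by lia.
have -> : (((t.+1).*2.+1)./2 = t.+1)%N by rewrite -divn2; lia.
rewrite exprD (exprS p (2 * t)) !(exprS y) exprM -natr1; ring.
Qed.

Lemma G0 : Gcoef p q y z 0 = 1.
Proof. by rewrite Gcoef_S /Sr big_geq // mulr0 addr0 /= expr0 mulr1. Qed.

Lemma G1 : Gcoef p q y z 1 = 1.
Proof.
rewrite Gcoef_S /Sr /index_iota /= big_cons big_nil /=.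
by rewrite mulr0n add0r mulr0 addr0 !expr0 mulr1.
Qed.

Lemma Dpoly_E : Dpoly p y = 1 - ((3%:R * (p ^+ 2 * y))%:P * 'X^2)
   + (3%:R * (p ^+ 2 * y) ^+ 2)%:P * 'X^4 - ((p ^+ 2 * y) ^+ 3)%:P * 'X^6.
Proof.
rewrite /Dpoly !(polyCM, polyC_exp, polyCMn, polyC1).
move: (polyC (p ^+ 2)) (polyC y) => P Y.
by ring.
Qed.
End Fin.

Unset Implicit Arguments.

Theorem theorem4 (R : comNzRingType) (p q y z : R) (n : nat) :
  \sum_(i < n.+1) Gcoef p q y z i * (Dpoly p y)`_(n - i) = (Apoly p q y z)`_n.
Proof.
set Gp := \poly_(i < n.+1) Gcoef p q y z i.
have -> : \sum_(i < n.+1) Gcoef p q y z i * (Dpoly p y)`_(n - i) = (Gp * Dpoly p y)`_n.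
  by rewrite coefM; apply: eq_bigr => i _; rewrite coef_poly ltn_ord.
rewrite Dpoly_E !(mulrDr, mulrBr) mulr1 !mulrN !(coefD, coefN).
rewrite [Gp * (_%:P * 'X^2)]mulrCA [Gp * (_%:P * 'X^4)]mulrCA [Gp * (_%:P * 'X^6)]mulrCA.
rewrite !coefCM !coefMXn /Gp !coef_poly ltnSn.
rewrite /Apoly !(coefD, coefN, coefB, coefCM, coefXn) coefX coef1.
rewrite !ltnS !leq_subr.
clear Gp.
case: n => [|[|[|[|[|[|[|[|[|n]]]]]]]]].
- by rewrite /= G0; ring.
- by rewrite /= G1; ring.
- by rewrite /= (Gcl_even p q y z 0) G0; ring.
- by rewrite /= (Gcl_odd p q y z 0) G1; ring.
- by rewrite /= (Gcl_even p q y z 1) (Gcl_even p q y z 0) G0; ring.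
- by rewrite /= (Gcl_odd p q y z 1) (Gcl_odd p q y z 0) G1; ring.
- by rewrite /= (Gcl_even p q y z 2) (Gcl_even p q y z 1) (Gcl_even p q y z 0) G0; ring.
- by rewrite /= (Gcl_odd p q y z 2) (Gcl_odd p q y z 1) (Gcl_odd p q y z 0) G1; ring.
- by rewrite /= (Gcl_even p q y z 3) (Gcl_even p q y z 2) (Gcl_even p q y z 1) (Gcl_even p q y z 0); ring.
rewrite /=.
case: (boolP (odd n)) => hn.
  have ht : n = (n./2).*2.+1 by rewrite -{1}(odd_double_half n) hn.
  rewrite ht; move: (n./2) => t.
  rewrite (_ : (t.*2.+2.+4.+4 - 2 = (t.+3).*2.+2)%N); last lia.
  rewrite (_ : (t.*2.+2.+4.+4 - 4 = (t.+2).*2.+2)%N); last lia.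
  rewrite (_ : (t.*2.+2.+4.+4 - 6 = (t.+1).*2.+2)%N); last lia.
  rewrite -[(t.*2.+2.+4.+4)%N]/((t.+4).*2.+2)%N !Gcl_even.
  rewrite !(exprS (p ^+ 2)) !(exprS y) -!natr1; ring.
have ht : n = (n./2).*2 by rewrite -{1}(odd_double_half n) (negbTE hn).
rewrite ht; move: (n./2) => t.
rewrite (_ : (t.*2.+1.+4.+4 - 2 = (t.+2).*2.+3)%N); last lia.
rewrite (_ : (t.*2.+1.+4.+4 - 4 = (t.+1).*2.+3)%N); last lia.
rewrite (_ : (t.*2.+1.+4.+4 - 6 = t.*2.+3)%N); last lia.
rewrite -[(t.*2.+1.+4.+4)%N]/((t.+3).*2.+3)%N !Gcl_odd.
rewrite !(exprS (p ^+ 2)) !(exprS y) -!natr1; ring.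
Qed.
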